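(* Replacing deterministic utilities by return distributions in an IGM-satisfying factorization does not guarantee the RIGM principle. Precisely: there exist a number of agents $N$, finite action sets, and a function $\Phi:\mathbb{R}^N\to\mathbb{R}$ such that for every choice of deterministic utilities $[Q_i(\tau_i,u_i)]_{i=1}^N$ the utilities $[Q_i]_{i=1}^N$ satisfy IGM for $Q_{jt}(\boldsymbol\tau,\boldsymbol u)=\Phi(Q_1(\tau_1,u_1),\dots,Q_N(\tau_N,u_N))$, and there exist per-agent return distributions $[Z_i(\tau_i,u_i)]_{i=1}^N$ (random variables on a common probability space) such that $[Z_i]_{i=1}^N$ do not satisfy RIGM for $Z_{jt}(\boldsymbol\tau,\boldsymbol u)=\Phi(Z_1(\tau_1,u_1),\dots,Z_N(\tau_N,u_N))$ with risk metric $\psi_\alpha$. This holds both when $\psi_\alpha$ is a Value-at-Risk metric $\mathrm{VaR}_\alpha$ (for some $\alpha$) and when $\psi_\alpha$ is a distortion risk measure (for instance $\mathrm{CVaR}_\alpha$ for some $\alpha$).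
   Context: There are $N$ agents; agent $i$ has observation history $\tau_i$ and a finite action set $U_i$; write $\boldsymbol\tau=(\tau_1,\dots,\tau_N)$, $\boldsymbol u=(u_1,\dots,u_N)$. For a real random variable $Z$ with CDF $F_Z$, its quantile function is $\theta_Z(\omega)=\inf\{z\in\mathbb{R}:\omega\le F_Z(z)\}$, $\omega\in(0,1]$. Value at Risk: $\mathrm{VaR}_\alpha(Z)=\theta_Z(\alpha)$. A distortion risk measure with differentiable distortion $g:[0,1]\to[0,1]$ is $\psi(Z)=\int_0^1 g'(\omega)\theta_Z(\omega)\,d\omega$; $\mathrm{CVaR}_\alpha$ is the distortion risk measure with $g(\omega)=\min(\omega/\alpha,1)$, i.e. $\mathrm{CVaR}_\alpha(Z)=\frac1\alpha\int_0^\alpha\theta_Z(\omega)d\omega$ (so $\mathrm{CVaR}_1=\mathbb{E}$). IGM: deterministic utilities $[Q_i]$ satisfy IGM for $Q_{jt}$ under $\boldsymbol\tau$ if $\arg\max_{\boldsymbol u}Q_{jt}(\boldsymbol\tau,\boldsymbol u)=(\arg\max_{u_1}Q_1(\tau_1,u_1),\dots,\arg\max_{u_N}Q_N(\tau_N,u_N))$. RIGM: given a risk metric $\psi_\alpha$, per-agent return distributions $[Z_i(\tau_i,u_i)]$ satisfy RIGM for a joint return distribution $Z_{jt}(\boldsymbol\tau,\boldsymbol u)$ with $\psi_\alpha$ under $\boldsymbol\tau$ if $\arg\max_{\boldsymbol u}\psi_\alpha[Z_{jt}(\boldsymbol\tau,\boldsymbol u)]=(\arg\max_{u_1}\psi_\alpha[Z_1(\tau_1,u_1)],\dots,\arg\max_{u_N}\psi_\alpha[Z_N(\tau_N,u_N)])$.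 Argmax sets are assumed to be singletons (ties broken by smallest index). *)

(* Defs.v *)
From HB Require Import structures.
From mathcomp Require Import all_boot all_order all_algebra.
From mathcomp Require Import all_classical all_reals all_analysis.
Set Implicit Arguments. Unset Strict Implicit. Unset Printing Implicit Defensive.
Import Order.TTheory GRing.Theory Num.Theory.
Local Open Scope classical_set_scope.
Local Open Scope ring_scope.

Definition is_argmax {d} {V : orderType d} (X : finType) (f : X -> V) (x : X) : Prop :=
  (forall y, (f y <= f x)%O) /\
  (forall y, f y = f x -> (enum_rank x <= enum_rank y)%N).

Definition lex_le (N : nat) (U : 'I_N -> finType) (u v : forall i, U i) : Prop :=
  (forall i, u i = v i) \/
  exists i : 'I_N, (forall j : 'I_N, (j < i)%N -> u j = v j) /\
                   (enum_rank (u i) < enum_rank (v i))%N.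

Definition is_joint_argmax {d} {V : orderType d} (N : nat) (U : 'I_N -> finType)
  (f : (forall i, U i) -> V) (u : forall i, U i) : Prop :=
  (forall v, (f v <= f u)%O) /\ (forall v, f v = f u -> lex_le u v).

(* IGM / RIGM (for a fixed joint observation history):
   argmax of the joint utility = tuple of per-agent argmaxes. *)
Definition IGM {d} {V : orderType d} (N : nat) (U : 'I_N -> finType)
  (Qjt : (forall i, U i) -> V) (Q : forall i, U i -> V) : Prop :=
  forall u : forall i, U i,
    is_joint_argmax Qjt u <-> (forall i, is_argmax (Q i) (u i)).

Section Risk.
Context {R : realType} {dT : measure_display} {T : measurableType dT}.
Variable P : probability T R.

Definition cdf (Z : T -> R) (z : R) : R := fine (P [set w | Z w <= z]).

Definition quantile (Z : T -> R) (w : R) : R := inf [set z : R | w <= cdf Z z].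

Definition VaR (alpha : R) (Z : T -> R) : \bar R := (quantile Z alpha)%:E.

Definition CVaR (alpha : R) (Z : T -> R) : \bar R :=
  (alpha^-1)%:E *
  (\int[@lebesgue_measure R]_(w in [set w : R | (0 < w <= alpha)%R]) (quantile Z w)%:E)%E.
End Risk.

Definition risk_metric (R : realType) :=
  forall (d : measure_display) (T : measurableType d), probability T R -> (T -> R) -> \bar R.

Definition IGM_not_RIGM (R : realType) (psi : risk_metric R) : Prop :=
  exists (N : nat) (U : 'I_N -> finType) (Phi : ('I_N -> R) -> R),
    (forall Q : forall i, U i -> R,
        IGM (fun u => Phi (fun i => Q i (u i))) Q) /\
    exists (d : measure_display) (T : measurableType d) (P : probability T R)
           (Z : forall i, U i -> T -> R),
      (forall i (a : U i), measurable_fun setT (Z i a)) /\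
      (forall u : forall i, U i,
          measurable_fun setT (fun w => Phi (fun i => Z i (u i) w))) /\
      ~ IGM (fun u => psi d T P (fun w => Phi (fun i => Z i (u i) w)))
            (fun i a => psi d T P (Z i a)).

(* Main.v *)
Require Import Defs.
From HB Require Import structures.
From mathcomp Require Import all_boot all_order all_algebra.
From mathcomp Require Import all_classical all_reals all_analysis.
From mathcomp Require Import ring lra.
Import Order.TTheory GRing.Theory Num.Theory.
Local Open Scope classical_set_scope.
Local Open Scope ring_scope.

Section S.
Variable R : realType.
Implicit Types Q : forall i : 'I_2, bool -> R.
Definition PB : probability bool R := bernoulli_prob (2^-1 : R).

Lemma cdfB (Y : bool -> R) z :
  Defs.cdf PB Y z = 2^-1 * (nat_of_bool (Y true <= z)%R)%:R + (1 - 2^-1) * (nat_of_bool (Y false <= z)%R)%:R.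
Proof.
rewrite /Defs.cdf /PB /=. rewrite bernoulli_probE; last by apply/andP; split; lra.
rewrite !diracE /= /unstable.onem.
have E b : (b \in [set w | Y w <= z]) = (Y b <= z).
  by apply/idP/idP; [move/set_mem | move=> h; apply/mem_set].
by rewrite !E.
Qed.

Lemma quantileB (Y : bool -> R) w : 0 < w <= 2^-1 ->
  quantile PB Y w = Order.min (Y true) (Y false).
Proof.
move=> /andP[w0 w2]; rewrite /Defs.quantile.
have -> : [set z | w <= Defs.cdf PB Y z] = [set` Interval (BLeft (Order.min (Y true) (Y false))) (BInfty _ false)].
  apply/seteqP; split => z /=; rewrite in_itv /= andbT ge_min cdfB;
  case: (Y true <= z); case: (Y false <= z) => //=; lra.
by rewrite inf_itv.
Qed.

Lemma VaRB (Y : bool -> R) : VaR PB 2^-1 Y = (Order.min (Y true) (Y false))%:E.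
Proof. by rewrite /VaR quantileB //; apply/andP; split; lra. Qed.

Lemma CVaRB (Y : bool -> R) : CVaR PB 2^-1 Y = (Order.min (Y true) (Y false))%:E.
Proof.
rewrite /CVaR.
have -> : [set w : R | (0 < w <= 2^-1)%R] = `]0, 2^-1]%classic.
  by apply/seteqP; split => x /=; rewrite in_itv.
rewrite (eq_integral (cst (Order.min (Y true) (Y false))%:E)); last first.
  move=> x; rewrite inE /= in_itv /= => hx; by rewrite quantileB.
rewrite integral_cst //= lebesgue_measure_itv /=.
rewrite lte_fin; have -> : ((0:R) < 2^-1) = true by apply/idP; lra.
rewrite /= -EFinD -!EFinM; congr EFin; by field.
Qed.

Definition i1 : 'I_2 := @Ordinal 2 1 isT.
Definition Phi2 (x : 'I_2 -> R) : R := x ord0 + x i1.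

Lemma ord2_cases (k : 'I_2) : k = ord0 \/ k = i1.
Proof. case: k => [[|[|m]] Hm]; [left|right|]; try exact/val_inj. by []. Qed.

Lemma rank_lt (x y : bool) : x != y -> (enum_rank x <= enum_rank y)%N -> (enum_rank x < enum_rank y)%N.
Proof.
move=> xy le; rewrite ltn_neqAle le andbT; apply/negP => /eqP/val_inj/enum_rank_inj E.
by rewrite E eqxx in xy.
Qed.

Lemma IGM_sum Q :
  IGM (U := fun _ : 'I_2 => (bool : finType)) (fun u => Phi2 (fun i => Q i (u i))) Q.
Proof.
move=> u; split.
- move=> [Hmax Htie] i; have [->|->] := ord2_cases i.
  + split.
    * move=> y; have := Hmax (fun j : 'I_2 => if j == ord0 then y else u j).
      by rewrite /Phi2 /= lerD2r.
    * move=> y Hy; have := Htie (fun j : 'I_2 => if j == ord0 then y else u j).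
      rewrite /Phi2 /= Hy => /(_ erefl) [Hall|[k [Hk Hr]]].
      - by have := Hall ord0; rewrite /= => ->.
      - have [Ek|Ek] := ord2_cases k; subst k.
        + by move: Hr; rewrite /= => /ltnW.
        + by have := Hk ord0 isT; rewrite /= => ->.
  + split.
    * move=> y; have := Hmax (fun j : 'I_2 => if j == i1 then y else u j).
      by rewrite /Phi2 /= lerD2l.
    * move=> y Hy; have := Htie (fun j : 'I_2 => if j == i1 then y else u j).
      rewrite /Phi2 /= Hy => /(_ erefl) [Hall|[k [Hk Hr]]].
      - by have := Hall i1; rewrite /= => ->.
      - have [Ek|Ek] := ord2_cases k; subst k.
        + by move: Hr; rewrite /= ltnn.
        + by move: Hr; rewrite /= => /ltnW.
- move=> H; have [H0m H0t] := H ord0; have [H1m H1t] := H i1; split.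
  + by move=> v; rewrite /Phi2; apply: lerD.
  + move=> v; rewrite /Phi2 => Hv.
    have a := H0m (v ord0); have b := H1m (v i1).
    have e0 : Q ord0 (v ord0) = Q ord0 (u ord0).
      by apply/eqP; rewrite eq_le a /=; rewrite -(lerD2r (Q i1 (v i1))) Hv lerD2l.
    have e1 : Q i1 (v i1) = Q i1 (u i1).
      by move: Hv; rewrite e0 => /addrI.
    have r0 := H0t _ e0; have r1 := H1t _ e1.
    case: (eqVneq (u ord0) (v ord0)) => E0.
    * case: (eqVneq (u i1) (v i1)) => E1.
      - by left => k; have [->|->] := ord2_cases k.
      - right; exists i1; split; last exact: rank_lt.
        move=> j hj; have [Ej|Ej] := ord2_cases j; subst j => //.
    * right; exists ord0; split; last exact: rank_lt.
      by move=> j.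
Qed.

Ltac mins := repeat match goal with |- context[Num.min ?a ?b] => case: (leP a b) => ? end; lra.

Definition Zc : forall i : 'I_2, (fun _ : 'I_2 => (bool : finType)) i -> bool -> R :=
  fun i a w => if i == ord0 then (if a then (if w then -1 else 1) else 0)
               else (if a then (if w then 2 else 0) else -5).

Lemma mainlem (psi : risk_metric R)
  (Hpsi : forall Y : bool -> R, psi _ _ PB Y = (Order.min (Y true) (Y false))%:E) :
  IGM_not_RIGM psi.
Proof.
exists 2, (fun _ => bool : finType), Phi2; split; first exact: IGM_sum.
exists _, bool, PB, Zc; split; [|split].
- by move=> i a.
- by move=> u.
- move=> H.
  pose u := fun j : 'I_2 => if j == ord0 then false else true.
  have [] := (H u).2.
    move=> i; have [->|->] := ord2_cases i; rewrite /u /=; split.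
    + by case; rewrite !Hpsi /Zc /= lee_fin; mins.
    + by case => //; rewrite !Hpsi /Zc /= => -[] E; exfalso; move: E; mins.
    + by case; rewrite !Hpsi /Zc /= lee_fin; mins.
    + by case => //; rewrite !Hpsi /Zc /= => -[] E; exfalso; move: E; mins.
  move=> /(_ (fun _ => true)); rewrite !Hpsi /Zc /u /Phi2 /= lee_fin.
  mins.
Qed.
End S.

Theorem theorem1 (R : realType) :
  (exists alpha : R, 0 < alpha <= 1 /\
     IGM_not_RIGM (fun d T P Z => @VaR R d T P alpha Z)) /\
  (exists alpha : R, 0 < alpha <= 1 /\
     IGM_not_RIGM (fun d T P Z => @CVaR R d T P alpha Z)).
Proof.
have ha : ((0:R) < 2^-1)%R && ((2^-1:R) <= 1)%R by apply/andP; split; lra.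
split; exists 2^-1; split => //; apply: mainlem => Y.
- exact: VaRB.
- exact: CVaRB.
Qed.
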